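(* Let $L$ be an i--lattice. Then: (1) for all $\theta\in{\rm Con}(L)$, $Cg_{L,\mathbb{I}}(\theta)=\theta\vee\theta'$; (2) for all $U\subseteq L^2$, $Cg_{L,\mathbb{I}}(U)=Cg_L(U)\vee(Cg_L(U))'=Cg_L(U)\vee Cg_L(U')$; (3) for all $a,b\in L$, $Cg_{L,\mathbb{I}}(a,b)=Cg_L(a,b)\vee(Cg_L(a,b))'=Cg_L(a,b)\vee Cg_L(a',b')$.
   Context: An i--lattice is a lattice $L$ with a unary operation $'$ such that $a''=a$ and $a\leq b\Rightarrow b'\leq a'$. ${\rm Con}(L)$ is the lattice of lattice congruences (joins $\vee$ in ${\rm Con}(L)$). $Cg_L(U)$ is the lattice congruence generated by $U\subseteq L^2$ and $Cg_{L,\mathbb{I}}(U)$ the congruence of the i--lattice $L$ (lattice congruence preserving $'$) generated by $U$; $Cg_L(a,b)=Cg_L(\{(a,b)\})$, similarly for $Cg_{L,\mathbb{I}}(a,b)$. For $U\subseteq L^2$, $U'=\{(a',b'):(a,b)\in U\}$. *)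

(* Defs.v *)
From HB Require Import structures.
From mathcomp Require Import all_boot all_order.
Set Implicit Arguments. Unset Strict Implicit. Unset Printing Implicit Defensive.
Import Order.Theory.
Local Open Scope order_scope.

Definition brel (T : Type) := T -> T -> Prop.

Definition releq (T : Type) (R S : brel T) : Prop := forall x y, R x y <-> S x y.

Section Congruences.
Context {disp : Order.disp_t} {L : latticeType disp}.

Definition is_lcong (th : brel L) : Prop :=
  [/\ (forall a, th a a),
      (forall a b, th a b -> th b a),
      (forall a b c, th a b -> th b c -> th a c),
      (forall a b c e, th a b -> th c e -> th (a `&` c) (b `&` e)) &
      (forall a b c e, th a b -> th c e -> th (a `|` c) (b `|` e))].

Definition is_ilattice (inv : L -> L) : Prop :=
  (forall a, inv (inv a) = a) /\ (forall a b, a <= b -> inv b <= inv a).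

Definition is_icong (inv : L -> L) (th : brel L) : Prop :=
  is_lcong th /\ (forall a b, th a b -> th (inv a) (inv b)).

Definition Cg (U : brel L) : brel L :=
  fun a b => forall th, is_lcong th -> (forall x y, U x y -> th x y) -> th a b.

Definition CgI (inv : L -> L) (U : brel L) : brel L :=
  fun a b => forall th, is_icong inv th -> (forall x y, U x y -> th x y) -> th a b.

Definition pairrel (a b : L) : brel L := fun x y => x = a /\ y = b.

Definition relinv (inv : L -> L) (U : brel L) : brel L :=
  fun x y => exists a b, U a b /\ x = inv a /\ y = inv b.

(* join in Con(L): congruence generated by the union *)
Definition cjoin (th ps : brel L) : brel L := Cg (fun a b => th a b \/ ps a b).

End Congruences.

(* Main.v *)
Require Import Defs.
From HB Require Import structures.
From mathcomp Require Import all_boot all_order.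

Section Aux.
Context {disp : Order.disp_t} {L : latticeType disp}.
Import Order.Theory.
Local Open Scope order_scope.

Lemma Cg_lcong (U : brel L) : is_lcong (Cg U).
Proof.
split.
- move=> a th Hth _; by case: Hth.
- move=> a b H th Hth HU; case: (Hth) => _ s _ _ _; exact: s (H th Hth HU).
- move=> a b c H1 H2 th Hth HU; case: (Hth) => _ _ t _ _;
  exact: t (H1 th Hth HU) (H2 th Hth HU).
- move=> a b c e H1 H2 th Hth HU; case: (Hth) => _ _ _ m _;
  exact: m (H1 th Hth HU) (H2 th Hth HU).
- move=> a b c e H1 H2 th Hth HU; case: (Hth) => _ _ _ _ j;
  exact: j (H1 th Hth HU) (H2 th Hth HU).
Qed.

Lemma Cg_incl (U : brel L) x y : U x y -> Cg U x y.
Proof. by move=> H th _ HU; apply: HU. Qed.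

Lemma Cg_min (U th : brel L) : is_lcong th -> (forall x y, U x y -> th x y) ->
  forall x y, Cg U x y -> th x y.
Proof. by move=> Hl HU x y H; apply: H. Qed.

Lemma cjoin_mono (a b c d : brel L) :
  (forall x y, a x y -> c x y) -> (forall x y, b x y -> d x y) ->
  forall x y, cjoin a b x y -> cjoin c d x y.
Proof.
move=> Hac Hbd; apply: Cg_min; first exact: Cg_lcong.
move=> x y [H|H]; apply: Cg_incl; [left; exact: Hac | right; exact: Hbd].
Qed.

Lemma Cg_ext (U V : brel L) : (forall x y, U x y -> V x y) ->
  forall x y, Cg U x y -> Cg V x y.
Proof.
move=> H; apply: Cg_min; first exact: Cg_lcong.
by move=> x y /H; apply: Cg_incl.
Qed.

Variable inv : L -> L.
Hypothesis Hi : is_ilattice inv.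

Lemma invK a : inv (inv a) = a.
Proof. by case: Hi. Qed.

Lemma invle a b : a <= b -> inv b <= inv a.
Proof. by case: Hi => _; apply. Qed.

Lemma inv_meet a b : inv (a `&` b) = inv a `|` inv b.
Proof.
apply/le_anti/andP; split; last first.
  by rewrite leUx !invle // ?leIl ?leIr.
rewrite -[X in _ <= X]invK; apply: invle.
have Ha : inv (inv a `|` inv b) <= a by rewrite -[X in _ <= X]invK invle // leUl.
have Hb : inv (inv a `|` inv b) <= b by rewrite -[X in _ <= X]invK invle // leUr.
by rewrite lexI Ha Hb.
Qed.

Lemma inv_join a b : inv (a `|` b) = inv a `&` inv b.
Proof.
by rewrite -{1}(invK a) -{1}(invK b) -inv_meet invK.
Qed.

Lemma pull_lcong (th : brel L) : is_lcong th ->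
  is_lcong (fun x y => th (inv x) (inv y)).
Proof.
case=> r s t m j; split.
- by move=> a; apply: r.
- by move=> a b; apply: s.
- by move=> a b c; apply: t.
- by move=> a b c e H1 H2; rewrite !inv_meet; apply: j.
- by move=> a b c e H1 H2; rewrite !inv_join; apply: m.
Qed.

Lemma relinvE (th : brel L) x y : relinv inv th x y <-> th (inv x) (inv y).
Proof.
split.
- by case=> a [b [H [-> ->]]]; rewrite !invK.
- by move=> H; exists (inv x), (inv y); rewrite !invK.
Qed.

Lemma CgI_icong (U : brel L) : is_icong inv (CgI inv U).
Proof.
split; last first.
  move=> a b H th Hth HU; case: (Hth) => _; apply; exact: H.
split.
- move=> a th [[r _ _ _ _] _] _; exact: r.
- move=> a b H th Hth HU; case: (Hth) => [[_ s _ _ _] _]; exact: s (H th Hth HU).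
- move=> a b c H1 H2 th Hth HU; case: (Hth) => [[_ _ t _ _] _];
  exact: t (H1 th Hth HU) (H2 th Hth HU).
- move=> a b c e H1 H2 th Hth HU; case: (Hth) => [[_ _ _ m _] _];
  exact: m (H1 th Hth HU) (H2 th Hth HU).
- move=> a b c e H1 H2 th Hth HU; case: (Hth) => [[_ _ _ _ j] _];
  exact: j (H1 th Hth HU) (H2 th Hth HU).
Qed.

Lemma part1 (th : brel L) : is_lcong th ->
  releq (CgI inv th) (cjoin th (relinv inv th)).
Proof.
move=> Hth x y; split.
- move=> H; apply: H.
  + split; first exact: Cg_lcong.
    move=> a b; apply: (Cg_min _ (fun x y => cjoin th (relinv inv th) (inv x) (inv y))).
    * apply: pull_lcong; exact: Cg_lcong.
    * move=> u v [H|H]; apply: Cg_incl.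
      - by right; apply/relinvE; rewrite !invK.
      - by left; apply/relinvE.
  + by move=> u v H; apply: Cg_incl; left.
- apply: Cg_min; first by case: (CgI_icong th).
  move=> u v [H|/relinvE H].
  + by move=> ps _ HU; apply: HU.
  + rewrite -(invK u) -(invK v); case: (CgI_icong th) => _; apply.
    by move=> ps _ HU; apply: HU.
Qed.

Lemma CgI_Cg (U : brel L) : releq (CgI inv U) (CgI inv (Cg U)).
Proof.
move=> x y; split => H th Hth HU; apply: H => // u v Huv.
- apply: HU; exact: Cg_incl.
- apply: (Cg_min U _) => //; by case: Hth.
Qed.

Lemma relinv_Cg (U : brel L) : releq (relinv inv (Cg U)) (Cg (relinv inv U)).
Proof.
move=> x y; split.
- move=> /relinvE H; rewrite -(invK x) -(invK y).
  apply: (Cg_min _ (fun x y => Cg (relinv inv U) (inv x) (inv y))) H.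
  + apply: pull_lcong; exact: Cg_lcong.
  + move=> u v Huv; apply: Cg_incl; apply/relinvE; by rewrite !invK.
- move=> H; apply/relinvE; move: H.
  apply: (Cg_min _ (fun x y => Cg U (inv x) (inv y))).
  + apply: pull_lcong; exact: Cg_lcong.
  + by move=> u v /relinvE; apply: Cg_incl.
Qed.

Lemma part2 (U : brel L) :
     releq (CgI inv U) (cjoin (Cg U) (relinv inv (Cg U)))
     /\ releq (cjoin (Cg U) (relinv inv (Cg U))) (cjoin (Cg U) (Cg (relinv inv U))).
Proof.
split.
- move=> x y; have := part1 (Cg U) (Cg_lcong U) x y; have := CgI_Cg U x y; tauto.
- move=> x y; split; apply: cjoin_mono => // u v; apply relinv_Cg.
Qed.

End Aux.

Theorem lemma4p30 (disp : Order.disp_t) (L : latticeType disp) (inv : L -> L) :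
  is_ilattice inv ->
  (forall th : brel L, is_lcong th ->
     releq (CgI inv th) (cjoin th (relinv inv th)))
  /\
  (forall U : brel L,
     releq (CgI inv U) (cjoin (Cg U) (relinv inv (Cg U)))
     /\ releq (cjoin (Cg U) (relinv inv (Cg U))) (cjoin (Cg U) (Cg (relinv inv U))))
  /\
  (forall a b : L,
     releq (CgI inv (pairrel a b)) (cjoin (Cg (pairrel a b)) (relinv inv (Cg (pairrel a b))))
     /\ releq (cjoin (Cg (pairrel a b)) (relinv inv (Cg (pairrel a b))))
              (cjoin (Cg (pairrel a b)) (Cg (pairrel (inv a) (inv b))))).
Proof.
move=> Hi; split; first exact: (@part1 _ _ inv Hi).
split; first exact: (@part2 _ _ inv Hi).
move=> a b; have [H1 H2] := @part2 _ _ inv Hi (pairrel a b); split => // x y.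
have E : cjoin (Cg (pairrel a b)) (Cg (relinv inv (pairrel a b))) x y <->
  cjoin (Cg (pairrel a b)) (Cg (pairrel (inv a) (inv b))) x y.
split; apply: cjoin_mono => // u v; apply: Cg_ext => p q.
- by case=> a' [b' [[-> ->] [-> ->]]].
- by case=> -> ->; exists a, b.
have := H2 x y; tauto.
Qed.
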